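(* Let $A$ be a finite alphabet. If $X\subseteq A^*$ is a regular language, then $W(X)$ is a regular language over $\{0,\dots,|A|-1\}$. In particular, if $X\subseteq A^{\mathbb{N}}$ is a (one-sided) sofic shift, then $W(X)$ is a sofic shift.
   Context: Winning set: for $n\in\mathbb{N}\cup\{\mathbb{N}\}$ and $X\subseteq A^n$, a choice sequence $\alpha=\alpha_0\alpha_1\cdots$ of length $n$ over $\{0,\dots,|A|-1\}$ determines a game: in round $j$ Alice chooses $A_j\subseteq A$ with $|A_j|=\alpha_j+1$, then Bob chooses $a_j\in A_j$; Alice wins if the produced word $a_0a_1\cdots$ lies in $X$. $W(X)$ is the set of choice sequences for which Alice has a winning strategy. For a set $X$ of words of various lengths, $W(X)=\bigcup_{n\in\mathbb{N}\cup\{\mathbb{N}\}}W(X\cap A^n)$. A one-sided sofic shift is the set of labels of right-infinite paths in a finite edge-labeled graph. *)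

(* Defs.v *)
From mathcomp Require Import all_boot.
Set Implicit Arguments. Unset Strict Implicit. Unset Printing Implicit Defensive.

Record dfa (T : finType) := DFA {
  dfa_state : finType;
  dfa_s0 : dfa_state;
  dfa_fin : pred dfa_state;
  dfa_trans : dfa_state -> T -> dfa_state }.

Definition dfa_accept (T : finType) (M : dfa T) (w : seq T) : bool :=
  @dfa_fin T M (foldl (@dfa_trans T M) (@dfa_s0 T M) w).

Definition regular (T : finType) (L : seq T -> Prop) : Prop :=
  exists M : dfa T, forall w, L w <-> dfa_accept M w.

(* One-sided sofic shift: the set of labels of right-infinite paths in a
   finite edge-labeled graph (vertex type V, labeled edge relation e u a v). *)
Definition sofic (T : finType) (X : (nat -> T) -> Prop) : Prop :=
  exists (V : finType) (e : V -> T -> V -> bool),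
    forall x : nat -> T, X x <-> exists v : nat -> V, forall i, e (v i) (x i) (v i.+1).

Notation choice_alph A := ('I_#|A|).

(* A strategy for Alice: given the history a_0...a_{j-1} of Bob's moves,
   the set A_j she offers. *)
Definition strategy (A : finType) := seq A -> {set A}.

(* Finite game of length n = size alpha: alpha is in W(X ∩ A^n). *)
Definition Wfin (A : finType) (X : seq A -> Prop) (alpha : seq (choice_alph A)) : Prop :=
  exists sigma : strategy A,
    (forall u i v, alpha = u ++ i :: v ->
       forall h : seq A, size h = size u -> #|sigma h| = (nat_of_ord i).+1) /\
    (forall w : seq A, size w = size alpha ->
       (forall u a v, w = u ++ a :: v -> a \in sigma u) -> X w).

Definition Winf (A : finType) (X : (nat -> A) -> Prop) (alpha : nat -> choice_alph A) : Prop :=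
  exists sigma : strategy A,
    (forall h : seq A, #|sigma h| = (nat_of_ord (alpha (size h))).+1) /\
    (forall x : nat -> A, (forall j, x j \in sigma (mkseq x j)) -> X x).

(* Main.v *)
Require Import Defs.
From mathcomp Require Import all_boot.
From Stdlib Require Import Classical ClassicalEpsilon.
Set Implicit Arguments. Unset Strict Implicit. Unset Printing Implicit Defensive.

Definition takeset (T : finType) (n : nat) (S : {set T}) : {set T} :=
  [set a in take n (enum S)].

Lemma card_takeset (T : finType) n (S : {set T}) : #|takeset n S| = minn n #|S|.
Proof.
rewrite /takeset cardsE (card_uniqP _) ?take_uniq ?enum_uniq //.
by rewrite size_take_min cardE.
Qed.

Lemma takeset_sub (T : finType) n (S : {set T}) : takeset n S \subset S.
Proof.
apply/subsetP => a; rewrite inE => /mem_take; by rewrite mem_enum.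
Qed.

Definition follows (A : finType) (sigma : strategy A) (w : seq A) :=
  forall u a v, w = u ++ a :: v -> a \in sigma u.

Lemma follows_cons (A : finType) (sigma : strategy A) a w :
  a \in sigma [::] -> follows (fun h => sigma (a :: h)) w -> follows sigma (a :: w).
Proof.
move=> Ha Hw [|c u] b v /=; first by case=> <- _.
by case=> <- E; apply: Hw E.
Qed.

Lemma follows_tail (A : finType) (sigma : strategy A) a w :
  follows sigma (a :: w) -> follows (fun h => sigma (a :: h)) w.
Proof. by move=> H u b v E; apply: (H (a :: u)); rewrite E. Qed.

Lemma follows_head (A : finType) (sigma : strategy A) a w :
  follows sigma (a :: w) -> a \in sigma [::].
Proof. by move=> H; apply: (H [::] a w). Qed.

Lemma followsP (A : finType) (a0 : A) (sigma : strategy A) w :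
  follows sigma w <-> forall k, k < size w -> nth a0 w k \in sigma (take k w).
Proof.
split.
  move=> H k Hk; apply: (H _ _ (drop k.+1 w)).
  by rewrite -(drop_nth a0 Hk) cat_take_drop.
move=> H u a v E; have Hk : size u < size w by rewrite E size_cat /= addnS ltnS leq_addr.
have := H _ Hk; rewrite E take_size_cat // nth_cat ltnn subnn //.
Qed.

Definition Wg (A : finType) (S : finType) (fin : pred S) (d : S -> A -> S) (q : S)
  (alpha : seq (choice_alph A)) : Prop :=
  exists sigma : strategy A,
    (forall u i v, alpha = u ++ i :: v ->
       forall h : seq A, size h = size u -> #|sigma h| = (nat_of_ord i).+1) /\
    (forall w : seq A, size w = size alpha -> follows sigma w -> fin (foldl d q w)).

Definition fstep (A : finType) (S : finType) (d : S -> A -> S) (i : choice_alph A) (P : {set S}) : {set S} :=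
  [set q | i < #|[set a | d q a \in P]|].

Definition dflt (A : finType) (alpha : seq (choice_alph A)) : strategy A :=
  fun h => takeset (nth 0 (map val alpha) (size h)).+1 setT.

Lemma dflt_ok (A : finType) (alpha : seq (choice_alph A)) :
  forall u i v, alpha = u ++ i :: v ->
       forall h : seq A, size h = size u -> #|dflt alpha h| = (nat_of_ord i).+1.
Proof.
move=> u i v -> h Hh; rewrite /dflt card_takeset cardsT Hh map_cat nth_cat size_map ltnn subnn /=.
by apply/minn_idPl; apply: ltn_ord.
Qed.

Lemma Wg_char (A : finType) (S : finType) (fin : pred S) (d : S -> A -> S) alpha :
  forall q, Wg fin d q alpha <-> q \in foldr (fstep d) [set q | fin q] alpha.
Proof.
elim: alpha => [|i al IH] q.
  split.
    case=> sigma [_ Hw]; rewrite inE; apply: (Hw [::]) => // u a v; by case: u.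
  rewrite inE => Hq; exists (fun _ => set0); split; first by case.
  by case.
set P := foldr (fstep d) [set q | fin q] al; split.
  case=> sigma [Hs Hw]; rewrite /= inE.
  have H0 : #|sigma [::]| = i.+1 by apply: (Hs [::] i al).
  rewrite -H0; apply: subset_leq_card; apply/subsetP => a Ha; rewrite inE -/P.
  apply/IH; exists (fun h => sigma (a :: h)); split.
    move=> u j v E h Hh; apply: (Hs (i :: u) j v); first by rewrite E.
    by rewrite /= Hh.
  move=> w Hsz Hf; apply: (Hw (a :: w)); first by rewrite /= Hsz.
  exact: follows_cons.
rewrite /= inE -/P => Hc.
set G := [set a | d q a \in P].
have : forall a, exists s : strategy A,
    (forall u j v, al = u ++ j :: v ->
       forall h : seq A, size h = size u -> #|s h| = (nat_of_ord j).+1) /\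
    (a \in G -> forall w : seq A, size w = size al -> follows s w -> fin (foldl d (d q a) w)).
  move=> a; case: (boolP (a \in G)) => Ha.
    by move: Ha; rewrite inE => /IH [s [H1 H2]]; exists s; split.
  by exists (dflt al); split => //; apply: dflt_ok.
case/fin_all_exists => ss Hss.
exists (fun h => if h is a :: h' then ss a h' else takeset i.+1 G); split.
  move=> [|c u] j v /=.
    case=> <- _ [|//] _; rewrite card_takeset; by apply/minn_idPl.
  case=> _ E [//|a h] /= [Hh]; exact: (proj1 (Hss a) u j v E).
move=> [//|a w] /= [Hsz] Hf.
have Ha : a \in G by apply: (subsetP (takeset_sub i.+1 G)); apply: (follows_head Hf).
apply: (proj2 (Hss a) Ha w Hsz); exact: (follows_tail Hf).
Qed.

Definition WDFA (A : finType) (M : dfa A) : dfa (choice_alph A) :=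
  @DFA _ {ffun {set dfa_state M} -> {set dfa_state M}}
    [ffun P => P]
    (fun g => @dfa_s0 _ M \in g [set q | @dfa_fin _ M q])
    (fun g i => [ffun P => g (fstep (@dfa_trans _ M) i P)]).

Lemma WDFA_fold (A : finType) (M : dfa A) alpha g :
  foldl (@dfa_trans _ (WDFA M)) g alpha =
  [ffun P => g (foldr (fstep (@dfa_trans _ M)) P alpha)].
Proof.
elim: alpha g => [|i al IH] g /=.
  by apply/ffunP => P; rewrite ffunE.
rewrite IH; apply/ffunP => P; by rewrite !ffunE.
Qed.

Lemma regular_part (A : finType) (X : seq A -> Prop) : regular X -> regular (Wfin X).
Proof.
case=> M HM; exists (WDFA M) => alpha.
rewrite /dfa_accept WDFA_fold /WDFA /= ffunE ffunE.
apply: iff_trans (Wg_char (@dfa_fin _ M) (@dfa_trans _ M) alpha (@dfa_s0 _ M)).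
rewrite /Wfin /Wg; split; case=> sigma [H1 H2]; exists sigma; split => // w Hw Hf.
  by apply/HM; apply: H2.
by apply/HM; apply: H2.
Qed.

Definition dlt (A V : finType) (e : V -> A -> V -> bool) (P : {set V}) (a : A) : {set V} :=
  [set w | [exists v in P, e v a w]].

Lemma mkseqS (T : Type) (x : nat -> T) n : mkseq x n.+1 = rcons (mkseq x n) (x n).
Proof. by rewrite /mkseq -addn1 iotaD map_cat cats1. Qed.

Lemma mkseq_take (T : Type) (x : nat -> T) k j : k <= j -> take k (mkseq x j) = mkseq x k.
Proof. by move=> H; rewrite /mkseq -map_take take_iota; congr (map _ (iota _ _)); apply/minn_idPl. Qed.

Lemma reach_back (A V : finType) (e : V -> A -> V -> bool) (x : nat -> A) m w :
  w \in foldl (dlt e) setT (mkseq x m) ->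
  exists p : nat -> V, p m = w /\ forall i, i < m -> e (p i) (x i) (p i.+1).
Proof.
elim: m w => [|m IH] w.
  by move=> _; exists (fun _ => w).
rewrite mkseqS foldl_rcons inE => /existsP [v /andP [Hv He]].
case: (IH v Hv) => p [Hp Hpe].
exists (fun i => if i == m.+1 then w else p i); split; first by rewrite eqxx.
move=> i Hi.
have -> : (i == m.+1) = false by apply/negbTE; rewrite neq_ltn Hi.
case E: (i == m).
  by move/eqP: E => ->; rewrite eqxx Hp.
have Him : i < m by rewrite ltn_neqAle E -ltnS Hi.
by rewrite eqSS E; apply: Hpe.
Qed.

Lemma konig (A V : finType) (e : V -> A -> V -> bool) (x : nat -> A) :
  (forall n, foldl (dlt e) setT (mkseq x n) != set0) ->
  exists v : nat -> V, forall i, e (v i) (x i) (v i.+1).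
Proof.
move=> Hne.
pose good n v := forall m, exists p : nat -> V, p n = v /\
   forall i, n <= i -> i < n + m -> e (p i) (x i) (p i.+1).
have Hlen : forall m, exists p : nat -> V, forall i, i < m -> e (p i) (x i) (p i.+1).
  move=> m; case/set0Pn: (Hne m) => w /reach_back [p [_ Hp]]; by exists p.
have good0 : exists v, good 0 v.
  apply: NNPP => Hn.
  have : forall v, exists m, ~ exists p : nat -> V, p 0 = v /\
      forall i, 0 <= i -> i < 0 + m -> e (p i) (x i) (p i.+1).
    move=> v; apply: NNPP => Hv; apply: Hn; exists v => m; apply: NNPP => Hm; apply: Hv; by exists m.
  case/fin_all_exists => mf Hmf.
  case: (Hlen (\max_v mf v)) => p Hp.
  apply: (Hmf (p 0)); exists p; split => // i _; rewrite add0n => Hi; apply: Hp.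
  apply: leq_trans Hi (leq_bigmax _).
have goodS : forall n v, good n v -> exists w, e v (x n) w /\ good n.+1 w.
  move=> n v Hg; apply: NNPP => Hn.
  have : forall w, exists m, e v (x n) w -> ~ exists p : nat -> V, p n.+1 = w /\
       forall i, n.+1 <= i -> i < n.+1 + m -> e (p i) (x i) (p i.+1).
    move=> w; apply: NNPP => Hw; apply: Hn; exists w; split.
      apply: NNPP => He; apply: Hw; exists 0 => He'; exfalso; exact: He He'.
    move=> m; apply: NNPP => Hm; apply: Hw; exists m => _; exact: Hm.
  case/fin_all_exists => mf Hmf.
  case: (Hg (\max_w mf w).+1) => p [Hpn Hp].
  have He : e v (x n) (p n.+1) by rewrite -Hpn; apply: Hp => //; rewrite addnS ltnS leq_addr.
  apply: (Hmf (p n.+1) He); exists p; split => // i Hi1 Hi2; apply: Hp; first exact: ltnW.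
  apply: leq_trans Hi2 _; rewrite addSn addnS ltnS leq_add2l; exact: leq_bigmax.
case: good0 => v0 Hv0.
pose p := fix p n := if n is n'.+1 then
   epsilon (inhabits v0) (fun w => e (p n') (x n') w /\ good n'.+1 w) else v0.
have Hg : forall n, good n (p n).
  elim => // n IH.
  by case: (epsilon_spec (inhabits v0) _ (goodS _ _ IH)).
exists p => i.
by case: (epsilon_spec (inhabits v0) _ (goodS _ _ (Hg i))).
Qed.

Lemma sofic_reach (A V : finType) (e : V -> A -> V -> bool) (x : nat -> A) :
  (exists v : nat -> V, forall i, e (v i) (x i) (v i.+1)) <->
  forall n, foldl (dlt e) setT (mkseq x n) != set0.
Proof.
split; last exact: konig.
case=> v Hv n; apply/set0Pn; exists (v n); elim: n => [|n IH]; first by rewrite inE.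
rewrite mkseqS foldl_rcons inE; apply/existsP; exists (v n); by rewrite IH Hv.
Qed.

Lemma dlt_fold_mono (A V : finType) (e : V -> A -> V -> bool) (h : seq A) :
  forall P P' : {set V}, P \subset P' -> foldl (dlt e) P h \subset foldl (dlt e) P' h.
Proof.
elim: h => //= a h IH P P' H; apply: IH; apply/subsetP => w; rewrite !inE.
case/existsP => v /andP [Hv He]; apply/existsP; exists v; by rewrite (subsetP H _ Hv) He.
Qed.

Lemma extend (A : finType) (a0 : A) (sigma : strategy A) (g : seq A) :
  (forall h, 0 < #|sigma h|) -> follows sigma g ->
  exists y : nat -> A, (forall n, y n \in sigma (mkseq y n)) /\ mkseq y (size g) = g.
Proof.
move=> Hne Hg.
pose pk h := odflt a0 [pick a in sigma h].
have Hpk : forall h, pk h \in sigma h.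
  move=> h; rewrite /pk; case: pickP => [a //|H].
  by have := Hne h; rewrite (eq_card0 H).
pose H := fix H n := if n is n'.+1 then
   rcons (H n') (if n' < size g then nth a0 g n' else pk (H n')) else [::].
pose y n := if n < size g then nth a0 g n else pk (H n).
have Hy : forall n, mkseq y n = H n.
  by elim => // n IH; rewrite mkseqS IH.
have Hg' : forall n, n <= size g -> H n = take n g.
  elim => [|n IH] Hn /=; first by rewrite take0.
  by rewrite IH ?(ltnW Hn) // Hn (take_nth a0 Hn).
exists y; split.
  move=> n; rewrite Hy /y; case: ifP => Hn; last exact: Hpk.
  rewrite Hg' ?(ltnW Hn) //; exact: (proj1 (followsP a0 sigma g) Hg n Hn).
by rewrite Hy Hg' // take_size.
Qed.

Definition Fs (A V : finType) (e : V -> A -> V -> bool) (i : nat) (Y : {set {set V}}) :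
  {set {set V}} := [set q | (q != set0) && (i < #|[set a | dlt e q a \in Y]|)].

Definition sedge (A V : finType) (e : V -> A -> V -> bool) (Y : {set {set V}})
  (i : choice_alph A) (Y' : {set {set V}}) : bool :=
  (setT \in Y) && (Y \subset Fs e i Y').

Definition asb (P : Prop) : bool := if excluded_middle_informative P then true else false.
Lemma asbE (P : Prop) : asb P <-> P.
Proof. by rewrite /asb; case: excluded_middle_informative. Qed.

Lemma sound (A V : finType) (e : V -> A -> V -> bool) (X : (nat -> A) -> Prop)
  (HX : forall x, X x <-> exists v : nat -> V, forall i, e (v i) (x i) (v i.+1))
  (alpha : nat -> choice_alph A) (Z : nat -> {set {set V}}) :
  (forall j, sedge e (Z j) (alpha j) (Z j.+1)) -> Winf X alpha.
Proof.
move=> HZ.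
pose q h := foldl (dlt e) setT h.
exists (fun h => if q h \in Z (size h) then
   takeset (alpha (size h)).+1 [set a | dlt e (q h) a \in Z (size h).+1]
   else takeset (alpha (size h)).+1 setT); split.
  move=> h; case: ifP => Hq; rewrite card_takeset; apply/minn_idPl.
    by case/andP: (HZ (size h)) => _ /subsetP /(_ _ Hq); rewrite inE => /andP [].
  by rewrite cardsT ltn_ord.
move=> x Hx; apply/HX; apply/sofic_reach.
have Hin : forall n, q (mkseq x n) \in Z n.
  elim => [|n IH]; first by case/andP: (HZ 0).
  have := Hx n; rewrite /= size_mkseq IH => /(subsetP (takeset_sub _ _)).
  by rewrite inE /q mkseqS foldl_rcons.
move=> n; case/andP: (HZ n) => _ /subsetP /(_ _ (Hin n)); rewrite inE => /andP [].
done.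
Qed.

Lemma complete (A V : finType) (e : V -> A -> V -> bool) (X : (nat -> A) -> Prop)
  (HX : forall x, X x <-> exists v : nat -> V, forall i, e (v i) (x i) (v i.+1))
  (alpha : nat -> choice_alph A) :
  Winf X alpha -> exists Z : nat -> {set {set V}}, forall j, sedge e (Z j) (alpha j) (Z j.+1).
Proof.
case=> sigma [Hs Hw].
have : 0 < #|sigma [::]| by rewrite Hs.
case/card_gt0P => a0 _.
have Hne : forall h, 0 < #|sigma h| by move=> h; rewrite Hs.
pose Good j q := exists tau : strategy A, (forall h, #|tau h| = (alpha (j + size h)).+1) /\
   forall h, follows tau h -> foldl (dlt e) q h != set0.
exists (fun j => [set q | asb (Good j q)]) => j; apply/andP; split.
  rewrite inE; apply/asbE.
  have [y [Hy _]] := @extend A a0 sigma [::] Hne (fun u a v => ltac:(by case: u)).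
  set g := mkseq y j.
  have Hg : follows sigma g.
    apply/(followsP a0) => k; rewrite size_mkseq => Hk.
    by rewrite nth_mkseq // mkseq_take // ltnW.
  exists (fun h => sigma (g ++ h)); split.
    by move=> h; rewrite Hs size_cat size_mkseq.
  move=> h Hh.
  have Hgh : follows sigma (g ++ h).
    apply/(followsP a0) => k; rewrite size_cat => Hk.
    rewrite nth_cat take_cat; case: ifP => Hkg.
      exact: (proj1 (followsP a0 sigma g) Hg k Hkg).
    apply: (proj1 (followsP a0 _ h) Hh).
    by rewrite ltn_subLR // leqNgt Hkg.
  have [y' [Hy' Hy'g]] := extend a0 Hne Hgh.
  have := proj1 (sofic_reach e y') (proj1 (HX y') (Hw y' Hy')) (size (g ++ h)).
  rewrite Hy'g foldl_cat => Hne'.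
  apply/negP => /eqP H0; move/negP: Hne'; apply.
  rewrite -subset0 -H0; apply: dlt_fold_mono; exact: subsetT.
apply/subsetP => q; rewrite !inE => /asbE [tau [Htau Hwin]].
apply/andP; split.
  by apply: (Hwin [::]); case.
have H0 : #|tau [::]| = (alpha j).+1 by rewrite Htau addn0.
rewrite -H0; apply: subset_leq_card; apply/subsetP => a Ha; rewrite !inE; apply/asbE.
exists (fun h => tau (a :: h)); split.
  by move=> h; rewrite Htau /= addSnnS.
move=> h Hh; exact: (Hwin (a :: h) (follows_cons Ha Hh)).
Qed.

Lemma sofic_part (A : finType) (X : (nat -> A) -> Prop) : sofic X -> sofic (Winf X).
Proof.
case=> V [e HX]; exists {set {set V}}; exists (sedge e) => alpha; split.
  exact: complete.
case=> Z HZ; exact: sound HZ.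
Qed.

Theorem mainTheorem11 (A : finType) :
  (forall X : seq A -> Prop, regular X -> regular (Wfin X)) /\
  (forall X : (nat -> A) -> Prop, sofic X -> sofic (Winf X)).
Proof.
split; [exact: regular_part | exact: sofic_part].
Qed.
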